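(* Let $H$ be a real Hilbert space, $n\ge1$, and let $x_1,\dots,x_{n+1}$ be elements of the closed unit ball of $H$ with $0\in\operatorname{Co}(\{x_i:1\le i\le n+1\})$. Then for each $1\le j\le n$ there exists $J\subseteq\{1,\dots,n+1\}$ with $|J|=j$ such that $$d\bigl(0,\operatorname{Co}(\{x_i:i\in J\})\bigr)\le\sqrt{\frac{n+1-j}{nj}}.$$
   Context: $\operatorname{Co}$ denotes convex hull and $d(x,S)=\inf_{s\in S}\|x-s\|$. *)

(* Defs.v *)
From HB Require Import structures.
From mathcomp Require Import all_boot all_order all_algebra.
From mathcomp Require Import all_classical all_reals all_analysis.
Set Implicit Arguments. Unset Strict Implicit. Unset Printing Implicit Defensive.
Import Order.TTheory GRing.Theory Num.Theory.
Import numFieldNormedType.Exports.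
Local Open Scope classical_set_scope.
Local Open Scope ring_scope.

(* A real inner product on a real normed module V inducing its norm.
   A real Hilbert space is a complete normed module whose norm comes
   from such an inner product. *)
Definition is_inner_product_of_norm (R : realType) (V : normedModType R)
    (ip : V -> V -> R) : Prop :=
  [/\ forall x y, ip x y = ip y x,
      forall a x y z, ip (a *: x + y) z = a * ip x z + ip y z
    & forall x, `|x| = Num.sqrt (ip x x)].

Definition conv_hull (R : realType) (V : lmodType R) (S : set V) : set V :=
  [set y | forall C : set (convex_lmodType V),
      convex_set C -> (S `<=` C) -> C y].

Definition dist_set (R : realType) (V : normedModType R) (x : V) (S : set V) : R :=
  inf [set `|x - s| | s in S].

(* Main.v *)
Require Import Defs.
From HB Require Import structures.
From mathcomp Require Import all_boot all_order all_algebra.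
From mathcomp Require Import all_classical all_reals all_analysis.
From mathcomp Require Import ring lra zify.
Import Order.TTheory GRing.Theory Num.Theory.
Import numFieldNormedType.Exports.
Local Open Scope classical_set_scope.
Local Open Scope ring_scope.
Local Open Scope convex_scope.
Set Implicit Arguments. Unset Strict Implicit. Unset Printing Implicit Defensive.
Section IP.
Variables (R : realType) (H : normedModType R) (ip : H -> H -> R).
Hypothesis hip : is_inner_product_of_norm ip.

Lemma ipC u v : ip u v = ip v u.
Proof. by case: hip. Qed.
Lemma ipL a u v z : ip (a *: u + v) z = a * ip u z + ip v z.
Proof. by case: hip. Qed.
Lemma ip0l z : ip 0 z = 0.
Proof. have := ipL 1 0 0 z; rewrite scaler0 add0r mul1r => h; lra. Qed.
Lemma ipZl a u z : ip (a *: u) z = a * ip u z.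
Proof. by have := ipL a u 0 z; rewrite addr0 ip0l addr0. Qed.
Lemma ipDl u v z : ip (u + v) z = ip u z + ip v z.
Proof. by have := ipL 1 u v z; rewrite scale1r mul1r. Qed.
Lemma ipNl u z : ip (- u) z = - ip u z.
Proof. by rewrite -scaleN1r ipZl mulN1r. Qed.
Lemma ipBl u v z : ip (u - v) z = ip u z - ip v z.
Proof. by rewrite ipDl ipNl. Qed.
Lemma ipNr u z : ip z (- u) = - ip z u.
Proof. by rewrite ipC ipNl ipC. Qed.
Lemma ipZr a u z : ip z (a *: u) = a * ip z u.
Proof. by rewrite ipC ipZl ipC. Qed.
Lemma ipDr u v z : ip z (u + v) = ip z u + ip z v.
Proof. by rewrite ipC ipDl ipC (ipC v). Qed.
Lemma ipBr u v z : ip z (u - v) = ip z u - ip z v.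
Proof. by rewrite ipC ipBl ipC (ipC v). Qed.
Lemma ip_norm u : ip u u = `|u| ^+ 2.
Proof.
case: hip => _ _ hn; rewrite hn.
have [h|h] := leP 0 (ip u u); first by rewrite sqr_sqrtr.
have : `|u| = 0 by rewrite hn; apply/eqP; rewrite sqrtr_eq0 ltW.
by move/normr0_eq0 => u0; move: h; rewrite u0 ip0l ltxx.
Qed.
Lemma ip_ge0 u : 0 <= ip u u.
Proof. by rewrite ip_norm sqr_ge0. Qed.
Lemma ip_sqD u v : ip (u + v) (u + v) = ip u u + 2 * ip u v + ip v v.
Proof. by rewrite ipDl !ipDr (ipC v u); ring. Qed.
Lemma ip_lin u v (B : R) : ip (u + B *: (u - v)) (u + B *: (u - v)) =
  ip u u + 2 * B * (ip u u - ip u v) + B ^+ 2 * (ip u u - 2 * ip u v + ip v v).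
Proof. by rewrite !(ipDl, ipDr, ipZl, ipZr, ipBl, ipBr, ipNl, ipNr) ?(ipC v u); ring. Qed.
Lemma ip_suml (I : Type) (r : seq I) (P : pred I) (F : I -> H) z :
  ip (\sum_(i <- r | P i) F i) z = \sum_(i <- r | P i) ip (F i) z.
Proof. by apply: (big_morph (fun u => ip u z)) => [u v|]; [exact: ipDl|exact: ip0l]. Qed.
End IP.
Section CC.
Variables (R : realType) (H : normedModType R) (N : nat) (x : 'I_N -> H).

Definition cc (S : {set 'I_N}) (y : H) := exists mu : 'I_N -> R,
  [/\ forall i, 0 <= mu i, forall i, i \notin S -> mu i = 0,
      \sum_i mu i = 1 & y = \sum_i mu i *: x i].

Lemma sum_delta (V : lmodType R) (F : 'I_N -> V) k :
  \sum_i (i == k)%:R *: F i = F k.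
Proof.
rewrite (bigD1 k) //= eqxx scale1r big1 ?addr0 // => i /negbTE ->.
by rewrite scale0r.
Qed.

Lemma sum_deltaR (F : 'I_N -> R) k : \sum_i (i == k)%:R * F i = F k.
Proof.
rewrite (bigD1 k) //= eqxx mul1r big1 ?addr0 // => i /negbTE ->.
by rewrite mul0r.
Qed.

Lemma cc_vertex (S : {set 'I_N}) k : k \in S -> cc S (x k).
Proof.
move=> kS; exists (fun i => (i == k)%:R); split.
- by move=> i; case: (i == k).
- by move=> i iS; case: eqP => // ik; move: iS; rewrite ik kS.
- by have := sum_deltaR (fun _ => 1) k; under eq_bigr do rewrite mulr1.
- by rewrite sum_delta.
Qed.

Lemma cc_conv (S : {set 'I_N}) y1 y2 (t : R) : 0 <= t <= 1 -> cc S y1 -> cc S y2 ->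
  cc S (t *: y1 + (1 - t) *: y2).
Proof.
move=> /andP[t0 t1] [m1 [p1 s1 e1 ->]] [m2 [p2 s2 e2 ->]].
exists (fun i => t * m1 i + (1 - t) * m2 i); split.
- by move=> i; rewrite addr_ge0 // mulr_ge0 // subr_ge0.
- by move=> i iS; rewrite s1 // s2 // !mulr0 addr0.
- by rewrite big_split /= -!mulr_sumr e1 e2 !mulr1 addrC subrK.
- rewrite !scaler_sumr -big_split /=; apply: eq_bigr => i _.
  by rewrite [RHS]scalerDl !scalerA.
Qed.

Lemma cc_drop (S : {set 'I_N}) y (mu : 'I_N -> R) k : (forall i, 0 <= mu i) -> (forall i, i \notin S -> mu i = 0) ->
  \sum_i mu i = 1 -> y = \sum_i mu i *: x i -> mu k < 1 ->
  cc (S :\ k) ((1 - mu k)^-1 *: (y - mu k *: x k)).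
Proof.
move=> p0 s0 e1 ey mk1.
have hk : 0 < 1 - mu k by rewrite subr_gt0.
exists (fun i => (1 - mu k)^-1 * (mu i - (i == k)%:R * mu k)); split.
- move=> i; apply: mulr_ge0; first by rewrite invr_ge0 ltW.
  by case: eqP => [->|_]; rewrite ?mul1r ?subrr ?mul0r ?subr0.
- move=> i; rewrite !inE negb_and negbK => /orP[/eqP->|iS].
    by rewrite eqxx mul1r subrr mulr0.
  have mi0 := s0 i iS.
  case: eqP => [ik|_] /=; last by rewrite mi0 mul0r subr0 mulr0.
  by rewrite -ik mi0 mulr0 subrr mulr0.
- rewrite -mulr_sumr big_split /= e1 sumrN sum_deltaR mulVf //.
  by rewrite gt_eqF.
- rewrite [RHS](eq_bigr (fun i => (1 - mu k)^-1 *: ((mu i - (i == k)%:R * mu k) *: x i)));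
    last by move=> i _; rewrite scalerA.
  rewrite -scaler_sumr; congr (_ *: _).
  under [RHS]eq_bigr do rewrite scalerBl.
  rewrite big_split /= sumrN ey; congr (_ - _).
  by under eq_bigr do rewrite -scalerA; rewrite sum_delta.
Qed.

Lemma cc_norm (S : {set 'I_N}) y : (forall i, `|x i| <= 1) -> cc S y -> `|y| <= 1.
Proof.
move=> hx [mu [p0 _ e1 ->]].
apply: (le_trans (ler_norm_sum _ _ _)).
rewrite -e1; apply: ler_sum => i _.
by rewrite normrZ ger0_norm // ler_piMr.
Qed.


Lemma cc_sub1 (mu : 'I_N -> R) k : (forall i, 0 <= mu i) ->
  \sum_i mu i = 1 -> 1 <= mu k -> forall i, i != k -> mu i = 0.
Proof.
move=> p0 e1 mk; move: e1; rewrite (bigD1 k) //= => e1.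
have hs : \sum_(i | i != k) mu i = 0.
  apply/eqP; rewrite eq_le sumr_ge0 ?andbT //.
  by move: e1 mk; move: (\sum_(i | i != k) mu i) => s; lra.
by move=> i ik; apply: (psumr_eq0P _ hs).
Qed.

Lemma cc_C (C : set (convex_lmodType H)) : convex_set C ->
  forall n (S : {set 'I_N}) y, #|S| = n -> (forall i, i \in S -> C (x i)) ->
  cc S y -> C y.
Proof.
move=> hC; elim=> [|n IH] S y hS hCS [mu [p0 s0 e1 ey]].
  have : \sum_i mu i = 0.
    by apply: big1 => i _; apply: s0; rewrite (cards0_eq hS) inE.
  by rewrite e1 => /eqP; rewrite oner_eq0.
have [k kS] : exists k, k \in S by apply/card_gt0P; rewrite hS.
have [mk1|mk1] := ltP (mu k) 1; last first.
  have -> : y = x k.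
    rewrite ey (bigD1 k) //= big1 ?addr0 => [|i ik]; last first.
      by rewrite (cc_sub1 p0 e1 mk1 ik) scale0r.
    have -> : mu k = 1.
      apply/eqP; rewrite eq_le mk1 andbT -e1 (bigD1 k) //= lerDl.
      exact: sumr_ge0.
    by rewrite scale1r.
  exact: hCS.
set y' := (1 - mu k)^-1 *: (y - mu k *: x k).
have cy' : cc (S :\ k) y' by exact: cc_drop p0 s0 e1 ey mk1.
have Cy' : C y'.
  apply: (IH (S :\ k)) cy'; first by rewrite (cardsD1 k S) kS in hS; case: hS.
  by move=> i; rewrite inE => /andP[_ /hCS].
have := @hC (x k : convex_lmodType H) (y' : convex_lmodType H) (Itv01 (p0 k) (ltW mk1)) (mem_set (hCS k kS)) (mem_set Cy').
rewrite inE; suff -> : y = ((x k : convex_lmodType H) <| Itv01 (p0 k) (ltW mk1) |> (y' : convex_lmodType H)) by [].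
have h1 : 1 - mu k != 0 by rewrite subr_eq0 eq_sym lt_eqF.
change (y = mu k *: x k + (1 - mu k) *: y'); rewrite /y' scalerA mulfV // scale1r addrC subrK //.
Qed.

Lemma cc_hull (S : {set 'I_N}) y : cc S y -> conv_hull (x @` [set i | i \in S]) y.
Proof.
move=> hy C hC hsub; apply: (cc_C hC erefl _ hy) => i iS.
by apply: hsub; exists i.
Qed.

Lemma hull_cc y : conv_hull (range x) y -> cc [set: 'I_N]%SET y.
Proof.
move=> h; apply: (h [set z | cc [set: 'I_N]%SET z]).
  move=> a b l; rewrite !inE /= => ha hb.
  apply: cc_conv => //; apply/andP; split; [exact: ge0| exact: le1].
by move=> _ [i _ <-]; apply: cc_vertex; rewrite inE.
Qed.

End CC.

Section Key.
Variables (R : realType) (H : normedModType R) (ip : H -> H -> R).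
Hypothesis hip : is_inner_product_of_norm ip.
Variables (N : nat) (x : 'I_N -> H).
Hypothesis hx : forall i, `|x i| <= 1.

Implicit Types S : {set 'I_N}.
Let sq u := ip u u.
Definition Dset (S : {set 'I_N}) : set R := [set sq y | y in cc x S].
Definition D (S : {set 'I_N}) : R := inf (Dset S).

Lemma sq_ge0 u : 0 <= sq u.
Proof. exact: ip_ge0. Qed.

Lemma cc_sq S y : cc x S y -> sq y <= 1.
Proof.
move=> hy; rewrite /sq ip_norm //.
have h := cc_norm hx hy.
by rewrite expr2 mulr_ile1.
Qed.

Lemma Dset_lb S : has_lbound (Dset S).
Proof. by exists 0 => _ [y _ <-]; exact: sq_ge0. Qed.

Lemma D_le S y : cc x S y -> D S <= sq y.
Proof. by move=> hy; apply: (ge_inf (Dset_lb S)); exists y. Qed.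

Lemma D_ge0 S k : k \in S -> 0 <= D S.
Proof.
move=> kS; apply: lb_le_inf; first by exists (sq (x k)), (x k) => //; exact: cc_vertex.
by move=> _ [y _ <-]; exact: sq_ge0.
Qed.

Lemma D_adh S k e : k \in S -> 0 < e -> exists y, cc x S y /\ sq y < D S + e.
Proof.
move=> kS e0; have [|z [y hy <-] hz] := @inf_adherent _ (Dset S) e e0.
  by split; [exists (sq (x k)), (x k) => //; exact: cc_vertex|exact: Dset_lb].
by exists y.
Qed.


Lemma keyL S (eta : R) : (1 < #|S|)%N -> 0 < eta ->
  exists2 k, k \in S &
    D (S :\ k) <= (1 - ((#|S|%:R - 1) ^+ 2)^-1) * D S
                  + ((#|S|%:R - 1) ^+ 2)^-1 + eta.
Proof.
move=> hS he.
have [k0 k0S] : exists k, k \in S by apply/card_gt0P; lia.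
set sR := (#|S|%:R : R).
have s2 : 2 <= sR by rewrite /sR (ler_nat R 2).
set eps := ((sR - 1) ^+ 2)^-1.
have heps : eps * (sR - 1) ^+ 2 = 1 by rewrite /eps mulVf // expf_neq0 // subr_eq0 gt_eqF //; lra.
set e := Num.min 1 (eta / 13).
have e0 : 0 < e by rewrite lt_min ltr01 divr_gt0.
have e1 : e <= 1 by rewrite ge_min lexx.
have e13 : 13 * e <= eta.
  have : e <= eta / 13 by rewrite ge_min lexx orbT.
  by move=> h; lra.
have [p [hp hpD]] := D_adh k0S (exprn_gt0 2 e0).
case: (hp) => mu [p0 s0 mu1 ep].
have [k kS kmin] := arg_minP (i0 := k0) (P := [pred i | i \in S]) mu k0S.
exists k => //.
have hsum : \sum_(i in S) mu i = 1.
  rewrite -mu1 [RHS](bigID [pred i | i \in S]) /= [X in _ = _ + X]big1 ?addr0 //.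
have hmk : mu k * sR <= 1.
  rewrite -[X in _ <= X]hsum.
  have -> : mu k * sR = \sum_(i in S) mu k by rewrite sumr_const /sR mulr_natr.
  apply: ler_sum => i iS.
  exact: kmin.
have mk0 := p0 k.
have mk1 : mu k < 1 by nra.
set B := mu k / (1 - mu k).
have hB : B * (1 - mu k) = mu k by rewrite /B mulfVK // subr_eq0 eq_sym lt_eqF.
have B0 : 0 <= B by rewrite /B divr_ge0 // subr_ge0 ltW.
have Bs : B * (sR - 1) <= 1 by nra.
have B1 : B <= 1 by nra.
have B2 : B ^+ 2 <= eps.
  have : (B * (sR - 1)) ^+ 2 <= 1 by rewrite expr_le1 // mulr_ge0 //; lra.
  rewrite exprMn => h.
  have hs1 : 0 < (sR - 1) ^+ 2 by rewrite exprn_gt0 //; lra.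
  by rewrite -(ler_pM2r hs1) heps.
have eps1 : eps <= 1.
  have hs1 : 1 <= (sR - 1) ^+ 2 by rewrite expr_ge1 //; lra.
  rewrite -[X in _ <= X]heps; apply: ler_peMr => //; rewrite /eps invr_ge0 exprn_ge0 //; lra.
set m' := (1 - mu k)^-1 *: (p - mu k *: x k).
have cm' : cc x (S :\ k) m' by exact: cc_drop p0 s0 mu1 ep mk1.
have em' : m' = p + B *: (p - x k).
  have h1 : 1 - mu k != 0 by rewrite subr_eq0 eq_sym lt_eqF.
  rewrite /m' /B !scalerBr !scalerA addrA.
  rewrite -[X in _ = X + _ - _]scale1r -scalerDl.
  congr (_ *: _ - _ *: _); first by field.
  by rewrite mulrC.
set t := e / 2.
have ht : 0 <= t <= 1 by apply/andP; split; rewrite /t; lra.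
have cq : cc x S (t *: x k + (1 - t) *: p) by exact: cc_conv ht (cc_vertex _ kS) hp.
have eq' : t *: x k + (1 - t) *: p = p + (- t) *: (p - x k).
  by rewrite scalerBl scale1r scalerBr !scaleNr opprK addrC addrA.
have Dq := D_le cq; rewrite eq' /sq ip_lin // in Dq.
have Dm := D_le cm'; rewrite em' /sq ip_lin // in Dm.
have P0 := sq_ge0 p; have P1 := cc_sq hp.
have X1 := cc_sq (cc_vertex x kS); have X0 := sq_ge0 (x k).
have DS0 := D_ge0 k0S.
rewrite /sq in P0 P1 X1 X0 hpD.
move: Dq Dm hpD P0 P1 X1 X0.
set P := ip p p; set X := ip (x k) (x k); set A := ip p (x k) - P.
have -> : ip p (x k) = A + P by rewrite /A subrK.
move=> Dq Dm hpD P0 P1 X1 X0.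
have hA : - (3 * e) <= A.
  rewrite leNgt; apply/negP => hA.
  have h1 : 0 < e ^+ 2 + 2 * t * A + t ^+ 2 * (X - P - 2 * A) by lra.
  have h2 : 0 < e * (e + A + e / 4 - e / 2 * A).
    by move: h1; rewrite /t; nra.
  have h3 : 0 < e + A + e / 4 - e / 2 * A by rewrite -(pmulr_rgt0 _ e0).
  nra.
have h4 : P + 2 * B * (P - (A + P)) + B ^+ 2 * (P - 2 * (A + P) + X) <= P + B ^+ 2 * (1 - P) + 6 * e * (B + B ^+ 2).
  have q1 : B ^+ 2 * X <= B ^+ 2 * 1 by rewrite ler_wpM2l // sqr_ge0.
  have q2 : 0 <= B * (A + 3 * e) by rewrite mulr_ge0 //; lra.
  have q3 : 0 <= B ^+ 2 * (A + 3 * e) by rewrite mulr_ge0 ?sqr_ge0 //; lra.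
  nra.
have q4 : B ^+ 2 * (1 - P) <= eps * (1 - P) by rewrite ler_wpM2r //; lra.
have q5 : 6 * e * (B + B ^+ 2) <= 12 * e.
  have : B ^+ 2 <= 1 by rewrite expr_le1.
  by nra.
have q6 : (1 - eps) * P <= (1 - eps) * (D S + e ^+ 2) by rewrite ler_wpM2l; lra.
have q7 : (1 - eps) * e ^+ 2 <= e.
  have : e ^+ 2 <= e by rewrite expr2 ler_piMr // ltW.
  by nra.
apply: (le_trans Dm); apply: (le_trans h4).
nra.
Qed.


Definition ff (j s : nat) : R := (s - j)%:R / ((s.-1)%:R * j%:R).

Lemma ffE j s : (1 <= j)%N -> (j <= s)%N ->
  ff j s = (s%:R - j%:R) / ((s%:R - 1) * j%:R).
Proof.
move=> j1 js; rewrite /ff natrB //; congr (_ / (_ * _)).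
by case: s js => [|s] js; [lia|rewrite /= -addn1 natrD addrK].
Qed.

Lemma ff_le1 j s : (1 <= j)%N -> (j <= s)%N -> 0 <= ff j s <= 1.
Proof.
move=> j1 js; rewrite /ff; apply/andP; split.
  by rewrite divr_ge0 // mulr_ge0.
have [s1|s1] := leqP s 1.
  by have -> : (s - j = 0)%N by lia.
rewrite ler_pdivrMr ?mul1r; last by rewrite mulr_gt0 // ltr0n; lia.
rewrite -natrM ler_nat; nia.
Qed.

Lemma ff_step j s : (1 <= j)%N -> (j <= s)%N ->
  (1 - ff j s) * (1 - ((s.+1%:R - 1) ^+ 2)^-1) = 1 - ff j s.+1 /\
  (1 - ff j s) * ((s.+1%:R - 1) ^+ 2)^-1 + ff j s = ff j s.+1.
Proof.
move=> j1 js.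
have js' : (j <= s.+1)%N by lia.
have e1 : (s.+1%:R - 1 : R) = s%:R by rewrite -addn1 natrD addrK.
rewrite e1.
have [s1|s1] := leqP s 1.
  have s1' : s = 1%N by lia.
  have j1' : j = 1%N by lia.
  rewrite s1' j1' /ff /= subnn (_ : (2 - 1 = 1)%N) //.
  by split; rewrite ?(mul0r, mulr0, subr0, mul1r, expr1n, invr1, divr1, subrr, addr0, invr0).
rewrite !ffE //.
have hs : (s%:R : R) != 0 by rewrite pnatr_eq0; lia.
have hs1 : (s%:R - 1 : R) != 0.
  by rewrite subr_eq0 (_ : 1 = 1%:R) // eqr_nat; lia.
have hj : (j%:R : R) != 0 by rewrite pnatr_eq0; lia.
rewrite e1 -[s.+1]addn1 natrD.
by split; field; rewrite ?hs ?hs1 ?hj.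
Qed.

Lemma mainInd j : (1 <= j)%N -> forall s, (j <= s)%N -> forall S, #|S| = s ->
  forall eta, 0 < eta -> exists J : {set 'I_N},
    [/\ J \subset S, #|J| = j & D J <= (1 - ff j s) * D S + ff j s + eta].
Proof.
move=> j1; elim=> [|s IH] js S hS eta he; first by lia.
have [js'|js'] := leqP j s; last first.
  have sj : s.+1 = j by lia.
  exists S; split => //; first by rewrite hS.
  rewrite /ff sj subnn mul0r subr0 mul1r addr0 lerDl; exact: ltW.
have hS2 : (1 < #|S|)%N by lia.
have he2 : 0 < eta / 2 by rewrite divr_gt0.
have [k kS hk] := keyL hS2 he2.
have hSk : #|S :\ k| = s by rewrite (cardsD1 k S) kS in hS; case: hS.
have [J [JS cJ hJ]] := IH js' (S :\ k) hSk (eta / 2) he2.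
exists J; split => //.
  by apply: (fintype.subset_trans JS); apply: subD1set.
rewrite hS in hk.
have [f0 f1] := andP (ff_le1 j1 js').
have [id1 id2] := ff_step j1 js'.
set eps := ((s.+1%:R - 1) ^+ 2)^-1 in hk id1 id2.
apply: (le_trans hJ).
have := ler_wpM2l (_ : 0 <= 1 - ff j s) hk.
rewrite subr_ge0 => /(_ f1).
rewrite !mulrDr mulrA id1 => h.
have : (1 - ff j s) * (eta / 2) <= eta / 2 by rewrite ler_piMl //; lra.
move: h; rewrite -id2; lra.
Qed.

End Key.

Theorem theorem5p2 (R : realType) (H : completeNormedModType R)
    (ip : H -> H -> R) (hip : is_inner_product_of_norm ip)
    (n : nat) (hn : (1 <= n)%N) (x : 'I_n.+1 -> H)
    (hx : forall i, `|x i| <= 1)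
    (h0 : conv_hull (range x) 0) :
  forall j : nat, (1 <= j <= n)%N ->
    exists J : {set 'I_n.+1}, #|J| = j /\
      dist_set 0 (conv_hull (x @` [set i | i \in J]))
        <= Num.sqrt ((n.+1 - j)%:R / (n * j)%:R).
Proof.
move=> j /andP[j1 jn].
have c0 : cc x [set: 'I_n.+1]%SET 0 := hull_cc h0.
have D0 : D ip x [set: 'I_n.+1]%SET <= 0.
  by apply: (le_trans (D_le hip c0)); rewrite /= (ip0l hip).
have jn' : (j <= n.+1)%N by lia.
have all : forall eta, 0 < eta -> exists J : {set 'I_n.+1},
    #|J| = j /\ D ip x J <= ff R j n.+1 + eta.
  move=> eta he.
  have cT : #|[set: 'I_n.+1]%SET| = n.+1 by rewrite cardsT card_ord.
  have [J [_ cJ hJ]] := mainInd hip hx j1 jn' cT he.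
  exists J; split => //; apply: (le_trans hJ).
  have [f0 f1] := andP (ff_le1 R j1 jn').
  have : (1 - ff R j n.+1) * D ip x [set: 'I_n.+1]%SET <= 0.
    by rewrite mulr_ge0_le0 // subr_ge0.
  lra.
have [J1 [cJ1 _]] := all 1 ltr01.
have [Jm cJm Jmin] := arg_minP (i0 := J1)
  (P := [pred J : {set 'I_n.+1} | #|J| == j]) (D ip x) (introT eqP cJ1).
have cJm' : #|Jm| = j by apply/eqP.
have DJm : D ip x Jm <= ff R j n.+1.
  apply/ler_addgt0Pr => e he; have [J [cJ hJ]] := all e he.
  by apply: le_trans hJ; apply: Jmin; rewrite /= cJ.
exists Jm; split => //.
have [k kJ] : exists k, k \in Jm by apply/card_gt0P; rewrite cJm'.
set C := conv_hull (x @` [set i | i \in Jm]).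
set E := [set `|0 - s| | s in C].
have Elb : has_lbound E by exists 0 => _ [y _ <-]; exact: normr_ge0.
have dge0 : 0 <= dist_set 0 C.
  apply: lb_le_inf; first by exists `|0 - x k|, (x k) => //; exact: (cc_hull (cc_vertex x kJ)).
  by move=> _ [y _ <-]; exact: normr_ge0.
have hsq : dist_set 0 C ^+ 2 <= ff R j n.+1.
  apply/ler_addgt0Pr => e he.
  have [y [cy hy]] := D_adh hip x kJ he.
  have hd : dist_set 0 C <= `|y|.
    rewrite -[`|y|]normrN -[- y]add0r.
    by apply: (ge_inf Elb); exists y => //; exact: cc_hull.
  have : `|y| ^+ 2 < D ip x Jm + e by rewrite -(ip_norm hip).
  have : dist_set 0 C ^+ 2 <= `|y| ^+ 2 by rewrite ler_pXn2r // ?nnegrE // (le_trans dge0).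
  lra.
rewrite -(ger0_norm dge0) -sqrtr_sqr natrM; apply: ler_wsqrtr.
exact: hsq.
Qed.
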